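(* Consider a finite two-player zero-sum Markov game $(S,A,B,p,r,\alpha)$ with discount factor $\alpha\in[0,1)$ and $R_{\max}=\max_{i,a,b}|r(i,a,b)|$. Let $(\theta_n)_{n\ge 0}$ be a real sequence with $0\le\theta_n\le 1$ and $\theta_n$ decreasing monotonically to $0$, and let step sizes $\beta_n(i,a,b)\in[0,1]$ be given, with $\bar\beta_n:=\max_{(i,a,b)}\beta_n(i,a,b)$ satisfying $\sum_{n}\bar\beta_n\theta_n<\infty$. Let $(Q_n)$ be generated by the two-step minimax Q-learning (TMQL) iteration described in the context, with $\|Q_0\|\le \frac{R_{\max}}{1-\alpha}$. Then for every $n\in\mathbb{N}$, $$\|Q_n\|\le \frac{R_{\max}}{1-\alpha}(1+\alpha\theta_0)\prod_{m=1}^{n-1}(1+\bar\beta_m\theta_m\alpha^2)\le M,\qquad M:=\frac{R_{\max}}{1-\alpha}(1+\alpha\theta_0)\prod_{m=1}^{\infty}(1+\bar\beta_m\theta_m\alpha^2)<\infty.$$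
   Context: A two-player zero-sum Markov game is $(S,A,B,p,r,\alpha)$ with finite state set $S$, finite action sets $A$ (player 1) and $B$ (player 2), transition probabilities $p(j\mid i,a,b)$, deterministic reward $r(i,a,b)\in\mathbb{R}$ to player 1 (player 2 receives $-r$), and discount $\alpha\in[0,1)$. Norms are max-norms: $\|z\|=\max_k|z(k)|$. For $Q\in\mathbb{R}^{S\times A\times B}$ and $i\in S$, $Q(i)$ denotes the $|A|\times|B|$ matrix $(Q(i,a,b))_{a,b}$, and for an $|A|\times|B|$ matrix $M$, $\mathrm{val}[M]:=\min_{y\in\Delta^{|B|}}\max_{x\in\Delta^{|A|}}x^{T}My$, where $\Delta^{m}$ is the probability simplex in $\mathbb{R}^m$. TMQL iteration: at each step $n$, a sample $(i,a,b,j,c,d,k)$ is generated, where $j\sim p(\cdot\mid i,a,b)$, actions $c\in A,d\in B$ are chosen at $j$, and $k\sim p(\cdot\mid j,c,d)$; then $Q_{n+1}(i,a,b)=(1-\beta_n(i,a,b))Q_n(i,a,b)+\beta_n(i,a,b)\big(r(i,a,b)+\alpha\,\mathrm{val}[Q_n(j)]+\alpha\theta_n(r(j,c,d)+\alpha\,\mathrm{val}[Q_n(k)])\big)$, and all other components are left unchanged ($Q_{n+1}(i',a',b')=Q_n(i',a',b')$ for $(i',a',b')\neq(i,a,b)$). *)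

(* Defs.v *)
From HB Require Import structures.
From mathcomp Require Import all_boot all_order all_algebra.
From mathcomp Require Import all_classical all_reals all_analysis.
Set Implicit Arguments. Unset Strict Implicit. Unset Printing Implicit Defensive.
Import Order.TTheory GRing.Theory Num.Theory.
Local Open Scope classical_set_scope.
Local Open Scope ring_scope.

Section Defs.
Variable R : realType.

Definition simplex (T : finType) : set (T -> R) :=
  [set x | (forall t, 0 <= x t) /\ \sum_(t : T) x t = 1].

Definition bilin (A B : finType) (M : A -> B -> R) (x : A -> R) (y : B -> R) : R :=
  \sum_(a : A) \sum_(b : B) x a * M a b * y b.

(* val[M] = min_{y in simplex B} max_{x in simplex A} x^T M y
   (min/max written as inf/sup, which are attained here) *)
Definition mval (A B : finType) (M : A -> B -> R) : R :=
  inf [set sup [set bilin M x y | x in @simplex A] | y in @simplex B].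

Definition qnorm (S A B : finType) (Q : S -> A -> B -> R) : R :=
  \big[Num.max/0]_(i : S) \big[Num.max/0]_(a : A) \big[Num.max/0]_(b : B) `|Q i a b|.

Definition Rmax (S A B : finType) (r : S -> A -> B -> R) : R := qnorm r.

Definition betabar (S A B : finType) (beta : nat -> S -> A -> B -> R) (n : nat) : R :=
  \big[Num.max/0]_(i : S) \big[Num.max/0]_(a : A) \big[Num.max/0]_(b : B) beta n i a b.

End Defs.

(* Main.v *)
Require Import Defs.
From HB Require Import structures.
From mathcomp Require Import all_boot all_order all_algebra.
From mathcomp Require Import all_classical all_reals all_analysis.
Import Order.TTheory GRing.Theory Num.Theory numFieldNormedType.Exports.
Local Open Scope classical_set_scope.
Local Open Scope ring_scope.

Lemma bigmax0_ge0 (R : realType) (I : finType) (f : I -> R) :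
  0 <= \big[Num.max/0]_(i : I) f i.
Proof. by elim/big_rec: _ => // i x _ hx; rewrite le_max hx orbT. Qed.

Lemma qnorm_ge0 (R : realType) (S A B : finType) (Q : S -> A -> B -> R) :
  0 <= qnorm Q.
Proof. exact: bigmax0_ge0. Qed.

Lemma qnorm_ub (R : realType) (S A B : finType) (Q : S -> A -> B -> R) i a b :
  `|Q i a b| <= qnorm Q.
Proof.
rewrite /qnorm; apply: le_trans (le_bigmax _ _ i).
apply: le_trans (le_bigmax _ _ a).
exact: le_bigmax.
Qed.

Lemma qnorm_le (R : realType) (S A B : finType) (Q : S -> A -> B -> R) K :
  0 <= K -> (forall i a b, `|Q i a b| <= K) -> qnorm Q <= K.
Proof.
move=> K0 H; rewrite /qnorm; apply: bigmax_le => // i _.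
apply: bigmax_le => // a _; apply: bigmax_le => // b _; exact: H.
Qed.

Lemma betabar_ge0 (R : realType) (S A B : finType) (beta : nat -> S -> A -> B -> R) n :
  0 <= betabar beta n.
Proof. exact: bigmax0_ge0. Qed.

Lemma betabar_ub (R : realType) (S A B : finType) (beta : nat -> S -> A -> B -> R) n i a b :
  beta n i a b <= betabar beta n.
Proof.
rewrite /betabar; apply: le_trans (le_bigmax _ _ i).
apply: le_trans (le_bigmax _ _ a).
exact: le_bigmax.
Qed.

Lemma sup_bound (R : realType) (E : set R) K :
  0 <= K -> (forall e, E e -> `|e| <= K) -> `|sup E| <= K.
Proof.
move=> K0 H; case: (pselect (exists e, E e)) => [[e Ee]|nE].
  have ub : ubound E K by move=> x /H; rewrite ler_norml => /andP[].
  have hs : has_ubound E by exists K.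
  rewrite ler_norml; apply/andP; split.
    have := H e Ee; rewrite ler_norml => /andP[he _].
    apply: le_trans he _; exact: ub_le_sup.
  by apply: ge_sup => //; exists e.
rewrite (_ : E = set0) ?sup0 ?normr0 //.
by apply/seteqP; split => x //= Ex; exfalso; apply: nE; exists x.
Qed.

Lemma inf_bound (R : realType) (E : set R) K :
  0 <= K -> (forall e, E e -> `|e| <= K) -> `|inf E| <= K.
Proof.
move=> K0 H; rewrite /inf normrN; apply: sup_bound => // _ [e Ee <-].
by rewrite normrN; apply: H.
Qed.

Lemma bilin_bound (R : realType) (A B : finType) (M : A -> B -> R) x y K :
  0 <= K -> (forall a b, `|M a b| <= K) -> simplex x -> simplex y ->
  `|bilin M x y| <= K.
Proof.
move=> K0 H [x0 x1] [y0 y1]; rewrite /bilin.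
apply: le_trans (ler_norm_sum _ _ _) _.
apply: (@le_trans _ _ (\sum_(a : A) \sum_(b : B) x a * K * y b)).
  apply: ler_sum => a _; apply: le_trans (ler_norm_sum _ _ _) _.
  apply: ler_sum => b _; rewrite !normrM (ger0_norm (x0 a)) (ger0_norm (y0 b)).
  apply: ler_wpM2r => //; apply: ler_wpM2l => //.
rewrite (eq_bigr (fun a => x a * K)) => [|a _]; last by rewrite -mulr_sumr y1 mulr1.
by rewrite -mulr_suml x1 mul1r.
Qed.

Lemma mval_bound (R : realType) (A B : finType) (M : A -> B -> R) K :
  0 <= K -> (forall a b, `|M a b| <= K) -> `|mval M| <= K.
Proof.
move=> K0 H; rewrite /mval; apply: inf_bound => // _ [y Hy <-].
apply: sup_bound => // _ [x Hx <-]; exact: bilin_bound.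
Qed.

Lemma upd_bound (R : realType) (be al th q r1 m1 r2 m2 K Rm : R) :
  0 <= be <= 1 -> 0 <= al -> 0 <= th -> `|q| <= K -> `|r1| <= Rm -> `|m1| <= K ->
  `|r2| <= Rm -> `|m2| <= K ->
  `|(1 - be) * q + be * (r1 + al * m1 + al * th * (r2 + al * m2))|
   <= (1 - be) * K + be * (Rm + al * K + al * th * (Rm + al * K)).
Proof.
move=> /andP[b0 b1] a0 t0 hq hr1 hm1 hr2 hm2.
have b1' : 0 <= 1 - be by rewrite subr_ge0.
apply: le_trans (ler_normD _ _) _; apply: lerD.
  by rewrite normrM ger0_norm // ler_wpM2l.
rewrite normrM ger0_norm //; apply: ler_wpM2l => //.
apply: le_trans (ler_normD _ _) _; apply: lerD.
  apply: le_trans (ler_normD _ _) _; apply: lerD => //.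
  by rewrite normrM ger0_norm // ler_wpM2l.
rewrite normrM ger0_norm ?mulr_ge0 //; apply: ler_wpM2l; first by rewrite mulr_ge0.
apply: le_trans (ler_normD _ _) _; apply: lerD => //.
by rewrite normrM ger0_norm // ler_wpM2l.
Qed.
From mathcomp Require Import ring lra.
Theorem mainTheorem1 (R : realType) (S A B : finType)
  (p : S -> A -> B -> S -> R) (r : S -> A -> B -> R) (alpha : R)
  (theta : nat -> R) (beta : nat -> S -> A -> B -> R)
  (Q : nat -> S -> A -> B -> R)
  (si : nat -> S) (sa : nat -> A) (sb : nat -> B) (sj : nat -> S)
  (sc : nat -> A) (sd : nat -> B) (sk : nat -> S) :
  (forall i a b j, 0 <= p i a b j) ->
  (forall i a b, \sum_(j : S) p i a b j = 1) ->
  0 <= alpha -> alpha < 1 ->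
  (forall n, 0 <= theta n <= 1) ->
  (forall n, theta n.+1 <= theta n) ->
  theta @ \oo --> (0 : R) ->
  (forall n i a b, 0 <= beta n i a b <= 1) ->
  cvgn (series (fun n => betabar beta n * theta n)) ->
  (forall n, 0 < p (si n) (sa n) (sb n) (sj n)) ->
  (forall n, 0 < p (sj n) (sc n) (sd n) (sk n)) ->
  qnorm (Q 0%N) <= Rmax r / (1 - alpha) ->
  (forall n i a b, Q n.+1 i a b =
     if (i == si n) && (a == sa n) && (b == sb n) then
       (1 - beta n i a b) * Q n i a b
       + beta n i a b * (r i a b + alpha * mval (Q n (sj n))
           + alpha * theta n * (r (sj n) (sc n) (sd n) + alpha * mval (Q n (sk n))))
     else Q n i a b) ->
  let P := fun n : nat => \prod_(1 <= m < n) (1 + betabar beta m * theta m * alpha ^+ 2) in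
  let C := Rmax r / (1 - alpha) * (1 + alpha * theta 0%N) in
  cvgn P /\
  forall n : nat, qnorm (Q n) <= C * P n /\ C * P n <= C * limn P.
Proof.
move=> _ _ a0 a1 th thdec _ be bcv _ _ hQ0 hQ P C.
set Rm := Rmax r.
set D := Rm / (1 - alpha).
set x := fun m => betabar beta m * theta m * alpha ^+ 2.
have a1' : 0 < 1 - alpha by rewrite subr_gt0.
have Rm0 : 0 <= Rm by apply: qnorm_ge0.
have D0 : 0 <= D by rewrite /D divr_ge0 // ltW.
have RmD : Rm = D * (1 - alpha) by rewrite /D mulrVK // unitfE gt_eqF.
have th0 : forall n, 0 <= theta n by move=> n; case/andP: (th n).
have thle : forall n, theta n <= theta 0%N.
  elim=> // n IH; exact: le_trans (thdec n) IH.
have x0 : forall m, 0 <= x m by move=> m; rewrite /x !mulr_ge0 ?betabar_ge0 ?sqr_ge0.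
have C0 : 0 <= C by rewrite /C mulr_ge0 // addr_ge0 // mulr_ge0.
have P0 : P 0%N = 1 by rewrite /P big_geq.
have P1 : P 1%N = 1 by rewrite /P big_geq.
have PS : forall n, (1 <= n)%N -> P n.+1 = P n * (1 + x n).
  by move=> n hn; rewrite /P big_nat_recr.
have Pge1 : forall n, 1 <= P n.
  case=> [|n]; first by rewrite P0.
  elim: n => [|n IH]; first by rewrite P1.
  rewrite PS //; apply: (le_trans IH); rewrite ler_peMr ?lerDl //; exact: le_trans IH.
have Pinc : forall n, P n <= P n.+1.
  case=> [|n]; first by rewrite P0 P1.
  rewrite (PS n.+1) // ler_peMr ?lerDl //; exact: (le_trans _ (Pge1 _)).
have step : forall n K V, 0 <= K -> qnorm (Q n) <= K -> K <= V ->
  (forall bb, 0 <= bb <= 1 -> bb <= betabar beta n ->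
    (1 - bb) * K + bb * (Rm + alpha * K + alpha * theta n * (Rm + alpha * K)) <= V) ->
  qnorm (Q n.+1) <= V.
  move=> n K V K0 hK KV H; apply: qnorm_le; first exact: le_trans KV.
  have hq : forall i a b, `|Q n i a b| <= K by move=> i a b; apply: (le_trans _ hK); exact: qnorm_ub.
  have hm : forall j, `|mval (Q n j)| <= K by move=> j; apply: mval_bound.
  move=> i a b; rewrite hQ; case: ifP => _; last by apply: le_trans (hq _ _ _) KV.
  apply: (le_trans _ (H _ (be n i a b) (betabar_ub _ _ _ _ beta n i a b))).
  apply: upd_bound => //; exact: qnorm_ub.
have base : qnorm (Q 1%N) <= C.
  have CD : C = D * (1 + alpha * theta 0%N) by [].
  apply: (step 0%N D) => //.
    by rewrite CD ler_peMr // lerDl mulr_ge0.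
  move=> bb /andP[b0 b1] _; rewrite CD RmD.
  have h : bb * (alpha * theta 0%N * D) <= alpha * theta 0%N * D.
    by apply: ler_piMl => //; apply: mulr_ge0 => //; exact: mulr_ge0.
  nra.
have main : forall n, qnorm (Q n) <= C * P n.
  case=> [|n].
    rewrite P0 mulr1; apply: (le_trans hQ0); rewrite /C -/Rm -/D; apply: ler_peMr => //.
    by rewrite lerDl; apply: mulr_ge0.
  elim: n => [|n IH]; first by rewrite P1 mulr1.
  set U := C * P n.+1.
  have U0 : 0 <= U by apply: mulr_ge0 => //; exact: (le_trans _ (Pge1 _)).
  have CU : C <= U by rewrite /U; apply: ler_peMr.
  apply: (step n.+1 U) => //.
    by rewrite (PS n.+1) // mulrA; apply: ler_peMr => //; rewrite lerDl.
  move=> bb /andP[b0 b1] hbb; rewrite (PS n.+1) // mulrA -/U.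
  have h1 : Rm * (1 + alpha * theta n.+1) <= (1 - alpha) * U.
    apply: (@le_trans _ _ ((1 - alpha) * C)); last by rewrite ler_wpM2l // ltW.
    rewrite /C -/Rm -/D RmD.
    have hh : (D * (1 - alpha)) * (alpha * theta n.+1) <= (D * (1 - alpha)) * (alpha * theta 0%N).
      by apply: ler_wpM2l; [apply: mulr_ge0 => //; exact: ltW | apply: ler_wpM2l].
    nra.
  have h2 : bb * (Rm * (1 + alpha * theta n.+1) - (1 - alpha) * U) <= 0.
    by apply: mulr_ge0_le0 => //; rewrite subr_le0.
  have h3 : bb * (alpha ^+ 2 * theta n.+1 * U) <= betabar beta n.+1 * (alpha ^+ 2 * theta n.+1 * U).
    by apply: ler_wpM2r => //; apply: mulr_ge0 => //; apply: mulr_ge0 => //; exact: sqr_ge0.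
  rewrite /x; nra.
have Pnd : nondecreasing_seq P by apply/nondecreasing_seqP.
set s := series (fun n => betabar beta n * theta n).
have snd : nondecreasing_seq s.
  apply/nondecreasing_seqP => n; rewrite /s seriesSr lerDl.
  by apply: mulr_ge0; [exact: betabar_ge0|].
have s0 : s 0%N = 0 by rewrite /s /series /= big_geq.
have PS' : forall n, P n.+1 <= P n * (1 + x n).
  case=> [|n]; first by rewrite P0 P1 mul1r lerDl.
  by rewrite (PS n.+1).
have Pexp : forall n, P n <= expR (alpha ^+ 2 * s n).
  elim=> [|n IH]; first by rewrite P0 s0 mulr0 expR0.
  apply: (le_trans (PS' n)).
  have -> : alpha ^+ 2 * s n.+1 = alpha ^+ 2 * s n + x n.
    by rewrite /s seriesSr /x; ring.
  rewrite expRD; apply: ler_pM => //.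
  - exact: (le_trans _ (Pge1 _)).
  - by apply: addr_ge0.
  - exact: expR_ge1Dx.
have Pcv : cvgn P.
  apply: nondecreasing_is_cvgn => //.
  exists (expR (alpha ^+ 2 * limn s)) => _ [n _ <-].
  apply: (le_trans (Pexp n)); rewrite ler_expR; apply: ler_wpM2l; first exact: sqr_ge0.
  exact: nondecreasing_cvgn_le.
split => // n; split; first exact: main.
by apply: ler_wpM2l => //; exact: nondecreasing_cvgn_le.
Qed.
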